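(* Let $Q_{\mathcal D}(w,x,y,z)=2(w^2+x^2+y^2+z^2)-(w+x+y+z)^2$ and $Q_{\mathcal L}(W,X,Y,Z)=-W^2+X^2+Y^2+Z^2$, and let $$\mathbf J_0=\frac12\begin{pmatrix}1&1&1&1\\1&1&-1&-1\\1&-1&1&-1\\1&-1&-1&1\end{pmatrix}.$$ For each $r\in\mathbb R$, the map $(W,X,Y,Z)^T=\mathbf J_0(w,x,y,z)^T$ is a bijection between real solutions of $Q_{\mathcal D}(w,x,y,z)=4r$ and real solutions of $Q_{\mathcal L}(W,X,Y,Z)=2r$, and it preserves the Euclidean height $H$. When $r=m\in\mathbb Z$, this map restricts to a bijection between integer solutions of $Q_{\mathcal D}(w,x,y,z)=4m$ and integer solutions of $Q_{\mathcal L}(W,X,Y,Z)=2m$. In particular, for all integers $m$ and all $T>0$, $N_{\mathcal D}(4m,T)=N_{\mathcal L}(2m,T)$.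
   Context: The Euclidean height of a real quadruple $\mathbf v=(w,x,y,z)$ is $H(\mathbf v)=(w^2+x^2+y^2+z^2)^{1/2}$. $N_{\mathcal D}(k,T)$ denotes the number of integer quadruples $\mathbf v$ with $Q_{\mathcal D}(\mathbf v)=k$ and $H(\mathbf v)\le T$; $N_{\mathcal L}(k,T)$ denotes the number of integer quadruples $\mathbf v$ with $Q_{\mathcal L}(\mathbf v)=k$ and $H(\mathbf v)\le T$. *)

(* Defs.v *)
From Stdlib Require Import Reals Lra Lia ZArith List.
Open Scope R_scope.

Definition R4 : Type := (R * R * R * R)%type.
Definition Z4 : Type := (Z * Z * Z * Z)%type.

Definition QD (v : R4) : R :=
  let '(w, x, y, z) := v in
  2 * (w^2 + x^2 + y^2 + z^2) - (w + x + y + z)^2.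

Definition QL (v : R4) : R :=
  let '(W, X, Y, Z) := v in
  - W^2 + X^2 + Y^2 + Z^2.

Definition H (v : R4) : R :=
  let '(w, x, y, z) := v in sqrt (w^2 + x^2 + y^2 + z^2).

Definition J0 (v : R4) : R4 :=
  let '(w, x, y, z) := v in
  ( (1/2) * (w + x + y + z),
    (1/2) * (w + x - y - z),
    (1/2) * (w - x + y - z),
    (1/2) * (w - x - y + z) ).

Definition bij_between {T U : Type} (A : T -> Prop) (B : U -> Prop) (f : T -> U) : Prop :=
  (forall x, A x -> B (f x)) /\
  (forall x1 x2, A x1 -> A x2 -> f x1 = f x2 -> x1 = x2) /\
  (forall y, B y -> exists x, A x /\ f x = y).

Definition toR4 (v : Z4) : R4 :=
  let '(a, b, c, d) := v in (IZR a, IZR b, IZR c, IZR d).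
Definition is_int4 (v : R4) : Prop := exists u : Z4, v = toR4 u.

(* Counting functions N_D(k,T), N_L(k,T): number of integer quadruples v with
   Q(v) = k and H(v) <= T.  Every such v has all coordinates of absolute value
   <= |T| < |up T|, so it suffices to enumerate the box [-K,K]^4, K = |up T|. *)
Definition box_coords (T : R) : list Z :=
  let K := Z.abs (up T) in
  map (fun i => (Z.of_nat i - K)%Z) (seq 0 (Z.to_nat (2 * K + 1))).

Definition box (T : R) : list Z4 :=
  let c := box_coords T in
  flat_map (fun a => flat_map (fun b => flat_map (fun d => map (fun e => (a, b, d, e)) c) c) c) c.

Definition count_sol (Q : R4 -> R) (k : Z) (T : R) : nat :=
  length (filter (fun u => if Req_EM_T (Q (toR4 u)) (IZR k) then
                             if Rle_dec (H (toR4 u)) T then true else false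
                           else false) (box T)).

Definition N_D (k : Z) (T : R) : nat := count_sol QD k T.
Definition N_L (k : Z) (T : R) : nat := count_sol QL k T.

(* Main.v *)
Require Import Defs.
From Stdlib Require Import Reals ZArith.
From Stdlib Require Import Lra Lia List.
Open Scope R_scope.

Lemma J0_invol v : J0 (J0 v) = v.
Proof. destruct v as [[[w x] y] z]; simpl; repeat f_equal; field. Qed.

Lemma QL_J0 v : QL (J0 v) = QD v / 2.
Proof. destruct v as [[[w x] y] z]; simpl; field. Qed.

Lemma QD_J0 v : QD (J0 v) = 2 * QL v.
Proof. destruct v as [[[w x] y] z]; simpl; field. Qed.

Lemma H_J0 v : H (J0 v) = H v.
Proof. destruct v as [[[w x] y] z]; simpl; f_equal; field. Qed.

Lemma J0_inj v1 v2 : J0 v1 = J0 v2 -> v1 = v2.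
Proof. intro E. rewrite <- (J0_invol v1), <- (J0_invol v2), E. reflexivity. Qed.

Lemma part1 r : bij_between (fun v => QD v = 4 * r) (fun v => QL v = 2 * r) J0.
Proof.
  split; [|split].
  - intros v Hv. rewrite QL_J0, Hv. field.
  - intros; now apply J0_inj.
  - intros y Hy. exists (J0 y). split; [rewrite QD_J0, Hy; ring | apply J0_invol].
Qed.

Definition sumz (u : Z4) : Z := let '(a,b,c,d) := u in (a+b+c+d)%Z.
Definition jz (u : Z4) : Z4 :=
  let '(a,b,c,d) := u in
  let k := ((a+b+c+d)/2)%Z in (k, (k-c-d)%Z, (k-b-d)%Z, (k-b-c)%Z).

Lemma jz_ok u k : sumz u = (2*k)%Z -> toR4 (jz u) = J0 (toR4 u).
Proof.
  destruct u as [[[a b] c] d]; unfold sumz, jz, toR4, J0; intro E. rewrite E.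
  rewrite Z.mul_comm, Z.div_mul by lia.
  assert (ER : IZR a + IZR b + IZR c + IZR d = 2 * IZR k).
  { rewrite <- !plus_IZR, <- mult_IZR. now f_equal. }
  repeat f_equal; rewrite ?minus_IZR; lra.
Qed.

Lemma QD_Z u : QD (toR4 u) = IZR (let '(a,b,c,d) := u in
   (2*(a*a+b*b+c*c+d*d) - (a+b+c+d)*(a+b+c+d))%Z).
Proof. destruct u as [[[a b] c] d]; unfold QD, toR4.
  rewrite ?minus_IZR, ?plus_IZR, ?mult_IZR, ?plus_IZR, ?mult_IZR. ring. Qed.

Lemma QL_Z u : QL (toR4 u) = IZR (let '(a,b,c,d) := u in
   (-(a*a)+b*b+c*c+d*d)%Z).
Proof. destruct u as [[[a b] c] d]; unfold QL, toR4.
  rewrite ?plus_IZR, ?opp_IZR, ?mult_IZR. ring. Qed.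

Lemma evenD u m : QD (toR4 u) = IZR (4*m) -> exists k, sumz u = (2*k)%Z.
Proof.
  rewrite QD_Z. intro E. apply eq_IZR in E.
  destruct u as [[[a b] c] d]; unfold sumz.
  destruct (Z.Even_or_Odd (a+b+c+d)) as [[k Hk]|[k Hk]]; [now exists k|].
  exfalso. rewrite Hk in E.
  assert (E2 : ((2*k+1)*(2*k+1) = 4*(k*k+k)+1)%Z) by ring. rewrite E2 in E. lia.
Qed.

Lemma evenL u m : QL (toR4 u) = IZR (2*m) -> exists k, sumz u = (2*k)%Z.
Proof.
  rewrite QL_Z. intro E. apply eq_IZR in E.
  destruct u as [[[a b] c] d]; unfold sumz.
  destruct (Z.Even_or_Odd (a+b+c+d)) as [[k Hk]|[k Hk]]; [now exists k|].
  exfalso.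
  assert (E3 : ((a+b+c+d)*(a+b+c+d) = 2*(m + a*a + a*b+a*c+a*d+b*c+b*d+c*d))%Z)
    by lia.
  rewrite Hk in E3.
  assert (E2 : ((2*k+1)*(2*k+1) = 4*(k*k+k)+1)%Z) by ring. rewrite E2 in E3. lia.
Qed.

Lemma toR4_inj u1 u2 : toR4 u1 = toR4 u2 -> u1 = u2.
Proof.
  destruct u1 as [[[a b] c] d], u2 as [[[a' b'] c'] d']; simpl; intro E.
  injection E; intros; repeat f_equal; now apply eq_IZR.
Qed.

Lemma part3 m : bij_between (fun v => is_int4 v /\ QD v = 4 * IZR m)
                 (fun v => is_int4 v /\ QL v = 2 * IZR m) J0.
Proof.
  split; [|split].
  - intros v [[u ->] Hv].
    destruct (evenD u m) as [k Hk]. { rewrite Hv, mult_IZR. reflexivity. }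
    split. { exists (jz u). symmetry. now apply (jz_ok u k). }
    rewrite QL_J0, Hv. field.
  - intros x1 x2 _ _ E; now apply J0_inj.
  - intros y [[u ->] Hy]. exists (J0 (toR4 u)). split; [|apply J0_invol].
    destruct (evenL u m) as [k Hk]. { rewrite Hy, mult_IZR. reflexivity. }
    split. { exists (jz u). symmetry. now apply (jz_ok u k). }
    rewrite QD_J0, Hy. ring.
Qed.

Lemma NoDup_flat_map_gen {A B} (f : A -> list B) l :
  NoDup l -> (forall a, NoDup (f a)) ->
  (forall a a' x, In x (f a) -> In x (f a') -> a = a') -> NoDup (flat_map f l).
Proof.
  intros Hl Hf Hd. induction Hl as [|a l Hna Hl IH]; simpl; [constructor|].
  apply NoDup_app; auto.
  intros x Hx Hx'. apply in_flat_map in Hx' as [a' [Ha' Hx']].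
  rewrite (Hd a a' x Hx Hx') in Hna. contradiction.
Qed.

Lemma in_box_coords T c : In c (box_coords T) <-> (- Z.abs (up T) <= c <= Z.abs (up T))%Z.
Proof.
  unfold box_coords. rewrite in_map_iff. split.
  - intros [i [<- Hi]]. apply in_seq in Hi. lia.
  - intro Hc. exists (Z.to_nat (c + Z.abs (up T))). split; [lia|].
    apply in_seq. lia.
Qed.

Lemma NoDup_box_coords T : NoDup (box_coords T).
Proof.
  unfold box_coords. apply NoDup_map_NoDup_ForallPairs; [|apply seq_NoDup].
  intros x y _ _ E. lia.
Qed.

Lemma in_box T a b c d : In (a,b,c,d) (box T) <->
  In a (box_coords T) /\ In b (box_coords T) /\ In c (box_coords T) /\ In d (box_coords T).
Proof.
  unfold box. rewrite in_flat_map. split.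
  - intros [a' [Ha H1]]. apply in_flat_map in H1 as [b' [Hb H1]].
    apply in_flat_map in H1 as [c' [Hc H1]]. apply in_map_iff in H1 as [d' [E Hd]].
    injection E; intros; subst; auto.
  - intros [Ha [Hb [Hc Hd]]]. exists a; split; auto. apply in_flat_map.
    exists b; split; auto. apply in_flat_map. exists c; split; auto.
    apply in_map_iff. exists d; auto.
Qed.

Lemma NoDup_box T : NoDup (box T).
Proof.
  unfold box. pose proof (NoDup_box_coords T) as N.
  apply NoDup_flat_map_gen; auto.
  2:{ intros a a' x H1 H2.
      apply in_flat_map in H1 as [? [_ H1]]. apply in_flat_map in H1 as [? [_ H1]].
      apply in_map_iff in H1 as [? [<- _]].
      apply in_flat_map in H2 as [? [_ H2]]. apply in_flat_map in H2 as [? [_ H2]].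
      apply in_map_iff in H2 as [? [E _]]. congruence. }
  intro a. apply NoDup_flat_map_gen; auto.
  2:{ intros b b' x H1 H2.
      apply in_flat_map in H1 as [? [_ H1]].
      apply in_map_iff in H1 as [? [<- _]].
      apply in_flat_map in H2 as [? [_ H2]].
      apply in_map_iff in H2 as [? [E _]]. congruence. }
  intro b. apply NoDup_flat_map_gen; auto.
  2:{ intros c c' x H1 H2.
      apply in_map_iff in H1 as [? [<- _]].
      apply in_map_iff in H2 as [? [E _]]. congruence. }
  intro c. apply NoDup_map_NoDup_ForallPairs; auto.
  intros x y _ _ E. congruence.
Qed.

Lemma coord_bound T (a s : R) : a^2 <= s -> sqrt s <= T -> Rabs a <= T.
Proof.
  intros H1 H2. rewrite <- sqrt_Rsqr_abs. unfold Rsqr.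
  eapply Rle_trans; [|exact H2]. apply sqrt_le_1_alt. simpl in H1. lra.
Qed.

Lemma int_in_coords T (a : Z) : Rabs (IZR a) <= T -> In a (box_coords T).
Proof.
  intro Ha. apply in_box_coords. destruct (archimed T) as [H1 _].
  pose proof (Rle_abs (IZR a)) as Ha1; pose proof (Rle_abs (- IZR a)) as Ha2; rewrite Rabs_Ropp in Ha2.
  assert (a < up T)%Z by (apply lt_IZR; lra).
  assert (- a < up T)%Z by (apply lt_IZR; rewrite opp_IZR; lra).
  lia.
Qed.

Lemma H_box T u : H (toR4 u) <= T -> In u (box T).
Proof.
  destruct u as [[[a b] c] d]; simpl; intro Hh. apply in_box.
  repeat split; apply int_in_coords; eapply coord_bound; try exact Hh;
  pose proof (pow2_ge_0 (IZR a)); pose proof (pow2_ge_0 (IZR b));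
  pose proof (pow2_ge_0 (IZR c)); pose proof (pow2_ge_0 (IZR d)); lra.
Qed.

Definition pr (Q : R4 -> R) (k : Z) (T : R) (u : Z4) : bool :=
  if Req_EM_T (Q (toR4 u)) (IZR k) then
    if Rle_dec (H (toR4 u)) T then true else false
  else false.

Lemma pr_iff Q k T u : pr Q k T u = true <-> Q (toR4 u) = IZR k /\ H (toR4 u) <= T.
Proof.
  unfold pr. destruct (Req_EM_T (Q (toR4 u)) (IZR k)), (Rle_dec (H (toR4 u)) T); split; intuition congruence.
Qed.

Lemma count_le {A} (l : list A) (p q : A -> bool) (g : A -> A) : NoDup l ->
  (forall x, In x l -> p x = true -> In (g x) l /\ q (g x) = true) ->
  (forall x y, p x = true -> p y = true -> g x = g y -> x = y) ->
  (length (filter p l) <= length (filter q l))%nat.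
Proof.
  intros N Hm Hi. rewrite <- (length_map g).
  apply NoDup_incl_length.
  - apply NoDup_map_NoDup_ForallPairs; [|now apply NoDup_filter].
    intros x y Hx Hy. apply filter_In in Hx, Hy. apply Hi; tauto.
  - intros y Hy. apply in_map_iff in Hy as [x [<- Hx]]. apply filter_In in Hx.
    apply filter_In. apply Hm; tauto.
Qed.

Lemma part4 m T : N_D (4 * m)%Z T = N_L (2 * m)%Z T.
Proof.
  unfold N_D, N_L, count_sol. fold (pr QD (4*m) T). fold (pr QL (2*m) T).
  apply Nat.le_antisymm; apply count_le with (g := jz); try apply NoDup_box.
  - intros u _ Hp. apply pr_iff in Hp as [E Hh].
    destruct (evenD u m E) as [k Hk].
    assert (H2 : H (J0 (toR4 u)) <= T) by (rewrite H_J0; auto).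
    split.
    + apply H_box. rewrite (jz_ok u k Hk). auto.
    + apply pr_iff. rewrite (jz_ok u k Hk). split; auto.
      rewrite QL_J0, E, !mult_IZR. field.
  - intros x y Hx Hy E. apply pr_iff in Hx as [Ex _], Hy as [Ey _].
    destruct (evenD x m Ex) as [k Hk], (evenD y m Ey) as [k' Hk'].
    apply toR4_inj, J0_inj. rewrite <- (jz_ok x k Hk), <- (jz_ok y k' Hk'), E. auto.
  - intros u _ Hp. apply pr_iff in Hp as [E Hh].
    destruct (evenL u m E) as [k Hk].
    assert (H2 : H (J0 (toR4 u)) <= T) by (rewrite H_J0; auto).
    split.
    + apply H_box. rewrite (jz_ok u k Hk). auto.
    + apply pr_iff. rewrite (jz_ok u k Hk). split; auto.
      rewrite QD_J0, E, !mult_IZR. ring.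
  - intros x y Hx Hy E. apply pr_iff in Hx as [Ex _], Hy as [Ey _].
    destruct (evenL x m Ex) as [k Hk], (evenL y m Ey) as [k' Hk'].
    apply toR4_inj, J0_inj. rewrite <- (jz_ok x k Hk), <- (jz_ok y k' Hk'), E. auto.
Qed.

Theorem lemma2p1 :
  (forall r : R,
     bij_between (fun v => QD v = 4 * r) (fun v => QL v = 2 * r) J0) /\
  (forall v : R4, H (J0 v) = H v) /\
  (forall m : Z,
     bij_between (fun v => is_int4 v /\ QD v = 4 * IZR m)
                 (fun v => is_int4 v /\ QL v = 2 * IZR m) J0) /\
  (forall (m : Z) (T : R), 0 < T -> N_D (4 * m)%Z T = N_L (2 * m)%Z T).
Proof.
  split; [exact part1|]. split; [exact H_J0|]. split; [exact part3|].
  intros m T _; apply part4.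
Qed.
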